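(* Let $\Gamma$ be a graph of order $n$, minimum degree $\delta$ and maximum degree $\Delta$. (1) For every $k\in\{2-\Delta,\dots,\Delta\}$, $n-\alpha_{\lfloor\frac{\Delta-k}{2}\rfloor}(\Gamma)\le\gamma_k^o(\Gamma)$. (2) For every $k\in\{1,\dots,\delta\}$, $\gamma_k^o(\Gamma)\le n-\alpha_{\lfloor\frac{\delta-k}{2}\rfloor}(\Gamma)$. (3) If $\Gamma$ is $\delta$-regular with $\delta>0$, then for every $k\in\{1,\dots,\delta\}$, $\gamma_k^o(\Gamma)=n-\alpha_{\lfloor\frac{\delta-k}{2}\rfloor}(\Gamma)$.
   Context: Graphs are finite and simple. For $S\subseteq V$ and $v\in V$, $\delta_S(v)$ is the number of neighbours of $v$ in $S$, $\overline{S}=V\setminus S$, and $\partial(S)$ is the set of vertices of $\overline{S}$ with a neighbour in $S$. For an integer $k$, a nonempty $S\subseteq V$ is an offensive $k$-alliance if $\delta_S(v)\ge\delta_{\overline{S}}(v)+k$ for all $v\in\partial(S)$, and a global offensive $k$-alliance if moreover it is dominating. $\gamma_k^o(\Gamma)$ is the minimum cardinality of a global offensive $k$-alliance. A set $S$ is $r$-dependent if $\delta_S(v)\le r$ for all $v\in S$; $\alpha_r(\Gamma)$ is the maximum cardinality of an $r$-dependent set in $\Gamma$. *)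

(* Defs.v *)
(* A finite simple graph on vertex type T : finType is a
   symmetric irreflexive relation e : rel T (hypotheses in the theorem). *)
From mathcomp Require Import all_boot all_order all_algebra.
Set Implicit Arguments. Unset Strict Implicit. Unset Printing Implicit Defensive.
Import Order.TTheory GRing.Theory Num.Theory.

Section Graph.
Variables (T : finType) (e : rel T).

Definition ndeg (S : {set T}) (v : T) : nat := #|[set u in S | e v u]|.

Definition deg (v : T) : nat := ndeg [set: T] v.

(* maximum and minimum degree (min over an empty vertex set defaults to 0 = n) *)
Definition maxdeg : nat := \max_(v : T) deg v.
Definition mindeg : nat := \big[minn/#|T|]_(v : T) deg v.

Definition boundary (S : {set T}) : {set T} :=
  [set v in ~: S | [exists u in S, e v u]].

Definition dominating (S : {set T}) : bool :=
  [forall v, (v \notin S) ==> [exists u in S, e v u]].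

Definition offensive_alliance (k : int) (S : {set T}) : bool :=
  (S != set0) &&
  [forall v in boundary S, ((ndeg S v)%:Z >= (ndeg (~: S) v)%:Z + k)%R].

Definition global_offensive_alliance (k : int) (S : {set T}) : bool :=
  offensive_alliance k S && dominating S.

(* gamma_k^o: minimum cardinality of a global offensive k-alliance
   (the whole vertex set is always one when T is nonempty). *)
Definition gamma_o (k : int) : nat :=
  \big[minn/#|T|]_(S : {set T} | global_offensive_alliance k S) #|S|.

Definition r_dependent (r : int) (S : {set T}) : bool :=
  [forall v in S, ((ndeg S v)%:Z <= r)%R].

Definition alpha (r : int) : nat :=
  \max_(S : {set T} | r_dependent r S) #|S|.

End Graph.

(* Main.v *)
Require Import Defs.
From mathcomp Require Import all_boot all_order all_algebra.
From mathcomp Require Import zify.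
Set Implicit Arguments. Unset Strict Implicit.
Import Order.TTheory GRing.Theory Num.Theory.

Lemma bigmin_le (I : finType) (P : pred I) (F : I -> nat) x i :
  P i -> \big[minn/x]_(j | P j) F j <= F i.
Proof.
move=> Pi; rewrite -[\big[minn/x]_(j | P j) F j]/(\big[minn/x]_(j <- index_enum I | P j) F j).
elim: (index_enum I) (mem_index_enum i) => //= a r IH; rewrite inE big_cons.
case/orP => [/eqP <-|Hr]; first by rewrite Pi geq_minl.
case: (P a); last exact: IH.
exact: leq_trans (geq_minr _ _) (IH Hr).
Qed.

Section H.
Variables (T : finType) (e : rel T).

Lemma ndeg_split S v : ndeg e S v + ndeg e (~:S) v = deg e v.
Proof.
rewrite /deg /ndeg -(cardsID S [set u in [set: T] | e v u]).
congr (_ + _); apply: eq_card => u; rewrite !inE; case: (u \in S) => //=; by rewrite andbC.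
Qed.

Lemma deg_le_max v : deg e v <= maxdeg e.
Proof. exact: leq_bigmax. Qed.

Lemma min_le_deg v : mindeg e <= deg e v.
Proof. exact: bigmin_le. Qed.

Lemma alpha_ge r X : r_dependent e r X -> #|X| <= alpha e r.
Proof. by move=> H; rewrite /alpha (bigD1 X) //= leq_maxl. Qed.

Lemma gamma_le k S : global_offensive_alliance e k S -> gamma_o e k <= #|S|.
Proof. move=> H; exact: (@bigmin_le _ (global_offensive_alliance e k) (fun S : {set T} => #|S|) #|T| S H). Qed.

Lemma gamma_ge m k : m <= #|T| ->
  (forall S, global_offensive_alliance e k S -> m <= #|S|) -> m <= gamma_o e k.
Proof.
move=> H1 H2; rewrite /gamma_o; elim/big_ind: _ => //.
by move=> x y Hx Hy; rewrite leq_min Hx Hy.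
Qed.

Lemma alpha_ex r : exists2 X, r_dependent e r X & #|X| = alpha e r.
Proof.
have H0 : r_dependent e r set0 by apply/forall_inP => v; rewrite inE.
have Hc : 0 < #|r_dependent e r| by apply/card_gt0P; exists set0.
have [X HX HE] := @eq_bigmax_cond _ (r_dependent e r) (fun S : {set T} => #|S|) Hc.
by exists X => //; rewrite /alpha -HE.
Qed.
End H.

Theorem mainTheorem3 (T : finType) (e : rel T)
  (esym : symmetric e) (eirr : irreflexive e) :
  (forall k : int, (2%:Z - (maxdeg e)%:Z <= k)%R -> (k <= (maxdeg e)%:Z)%R ->
     #|T| - alpha e (((maxdeg e)%:Z - k) %/ 2)%Z <= gamma_o e k) /\
  (forall k : int, (1 <= k)%R -> (k <= (mindeg e)%:Z)%R ->
     gamma_o e k <= #|T| - alpha e (((mindeg e)%:Z - k) %/ 2)%Z) /\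
  ((forall v : T, deg e v = mindeg e) -> 0 < mindeg e ->
   forall k : int, (1 <= k)%R -> (k <= (mindeg e)%:Z)%R ->
     gamma_o e k = #|T| - alpha e (((mindeg e)%:Z - k) %/ 2)%Z).
Proof.
have P1 : forall k : int, 
     #|T| - alpha e (((maxdeg e)%:Z - k) %/ 2)%Z <= gamma_o e k.
  move=> k; apply: gamma_ge; first exact: leq_subr.
  move=> S /andP[/andP[_ /forall_inP Hb] /forallP Hd].
  have Hdep : r_dependent e (((maxdeg e)%:Z - k) %/ 2)%Z (~: S).
    apply/forall_inP => v vX.
    have vS : v \notin S by rewrite inE in vX.
    have vb : v \in boundary e S.
      by rewrite inE vX /=; exact: (implyP (Hd v) vS).
    have := Hb v vb; rewrite lez_divRL //.
    have := ndeg_split e S v; have := deg_le_max e v; lia.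
  have := alpha_ge Hdep; have := cardsC S; lia.
have P2 : forall k : int, (1 <= k)%R -> (k <= (mindeg e)%:Z)%R ->
     gamma_o e k <= #|T| - alpha e (((mindeg e)%:Z - k) %/ 2)%Z.
  move=> k k1 kd.
  have [X HX <-] := alpha_ex e (((mindeg e)%:Z - k) %/ 2)%Z.
  have key : forall v, v \in X -> ((ndeg e X v)%:Z + k <= (ndeg e (~: X) v)%:Z)%R.
    move=> v vX; have := forall_inP HX v vX; rewrite lez_divRL //.
    have := ndeg_split e X v; have := min_le_deg e v; lia.
  case: (boolP (X == [set: T])) => [/eqP XT | XnT].
    case: (pickP T) => [v _ | T0].
      have := key v; rewrite XT inE => /(_ isT).
      rewrite setCT /ndeg; have -> : [set u in set0 | e v u] = set0.
        by apply/setP => u; rewrite !inE.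
      rewrite cards0; lia.
    have G : gamma_o e k <= #|T|.
      by rewrite /gamma_o; elim/big_ind: _ => //; [move=> x y Hx _; rewrite geq_min Hx | move=> S _; exact: max_card].
    have T00 : #|T| = 0 by apply: eq_card0.
    lia.
  rewrite -(cardsC X) addKn; apply: gamma_le.
  have HS : ~: X != set0.
    apply: contra XnT => /eqP H; by rewrite -(setCK X) H setC0.
  have dom : forall v, v \in X -> [exists u in ~: X, e v u].
    move=> v vX; have := key v vX; rewrite /ndeg.
    case: (boolP [exists u in ~: X, e v u]) => // /exists_inP Hn.
    have -> : [set u in ~: X | e v u] = set0.
      apply/setP => u; rewrite !inE; apply/negP => /andP[a b].
      by apply: Hn; exists u; rewrite ?inE.
    rewrite cards0; lia.
  apply/andP; split; [apply/andP; split=> // | ].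
    apply/forall_inP => v; rewrite inE setCK => /andP[vX _].
    exact: key.
  apply/forallP => v; apply/implyP; rewrite inE negbK => vX; exact: dom.
split; first by move=> k _ _; exact: P1.
split; first exact: P2.
move=> reg dpos k k1 kd.
apply/eqP; rewrite eqn_leq P2 //=.
have -> : mindeg e = maxdeg e.
  apply/eqP; rewrite eqn_leq.
  case: (pickP T) => [v _ | T0].
    rewrite (leq_trans (min_le_deg e v) (deg_le_max e v)) /=.
    by apply/bigmax_leqP => u _; rewrite reg.
  exfalso; move: dpos; rewrite /mindeg; elim/big_ind: _.
  - by have -> : #|T| = 0 by apply: eq_card0.
  - by move=> x y Hx Hy; rewrite /minn; case: ifP.
  - by move=> i; have := T0 i.
exact: P1.
Qed.
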